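(* There is a constant $C>0$ such that the following holds. Let $p$ be any prime and let $A$, $B$ be any $p$-groups with $|A|=p^a$, $|B|=p^b$, $a,b\ge 1$. Let $p^d$ be the maximum order of an element of $A$; for $m\ge1$ let $s_m$ be the number of elements $g\in A$ with $g^m=1$; for a divisor $n$ of $|B|$ let $d_n$ be the number of elements of $B$ of order $n$; and for $0\le n\le b$ let $k_n=\frac{p^{-n}d_{p^{b-n}}}{a(B)}$. Then $$\left|\,a(A\wr B)-\left(p^d a(B)-(p-1)a(B)\sum_{n=0}^{b}k_n\, p^{d-1}\left(\frac{s_{p^{d-1}}}{p^a}\right)^{p^n}\right)\right|\le C\,p^{d-1}a(B).$$
   Context: For a finite group $G$, the average order is $a(G)=\frac{1}{|G|}\sum_{g\in G}\mathrm{order}(g)$. For groups $A,B$, let $K=\prod_{b\in B}A$, on which $B$ acts by $x\cdot(\alpha_b)_b=(\alpha_{x^{-1}b})_b$ for $x\in B$; the wreath product $A\wr B$ is the semidirect product $K\rtimes B$ for this action. *)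

(* Defs.v *)
From HB Require Import structures.
From mathcomp Require Import all_boot all_order all_algebra all_fingroup.
From mathcomp Require Import all_classical all_reals.

Set Implicit Arguments.
Unset Strict Implicit.
Unset Printing Implicit Defensive.

Import GRing.Theory Num.Theory.

(* The (unrestricted) wreath product gT wr hT, carrier {ffun hT -> gT} * hT,
   with multiplication (f,x)(g,y) = (f * (x . g), x y) where
   (x . g)(b) = g (x^-1 b), i.e. K ⋊ B for the action x.(a_b)_b = (a_{x^-1 b})_b. *)
Section Wreath.
Variables (gT hT : finGroupType).

Definition wreath_type : Type := ({ffun hT -> gT} * hT)%type.
HB.instance Definition _ := Finite.on wreath_type.

Local Open Scope group_scope.

Definition wr_act (x : hT) (g : {ffun hT -> gT}) : {ffun hT -> gT} :=
  [ffun b => g (x^-1 * b)].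

Definition wr_mul (u v : wreath_type) : wreath_type :=
  ([ffun b => u.1 b * wr_act u.2 v.1 b], u.2 * v.2).
Definition wr_one : wreath_type := ([ffun => 1], 1).
Definition wr_inv (u : wreath_type) : wreath_type :=
  ([ffun b => (u.1 (u.2 * b))^-1], u.2^-1).

Lemma wr_mulA : associative wr_mul.
Proof.
move=> [f x] [g y] [h z]; rewrite /wr_mul /wr_act /=; congr (_, _); last first.
  by rewrite mulgA.
by apply/ffunP => b; rewrite !ffunE /= invMg; rewrite !mulgA.
Qed.

Lemma wr_mul1 : left_id wr_one wr_mul.
Proof.
move=> [f x]; rewrite /wr_mul /wr_act /wr_one /=; congr (_, _); last first.
  by rewrite mul1g.
by apply/ffunP => b; rewrite !ffunE invg1 !mul1g.
Qed.

Lemma wr_mulV : left_inverse wr_one wr_inv wr_mul.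
Proof.
move=> [f x]; rewrite /wr_mul /wr_act /wr_one /wr_inv /=; congr (_, _); last first.
  by rewrite mulVg.
by apply/ffunP => b; rewrite !ffunE /= invgK mulVg.
Qed.

HB.instance Definition _ :=
  Finite_isGroup.Build wreath_type wr_mulA wr_mul1 wr_mulV.

End Wreath.

Section WreathSet.
Variables (gT hT : finGroupType).
Definition wreath (A : {set gT}) (B : {set hT}) : {set wreath_type gT hT} :=
  [set u : wreath_type gT hT |
     [forall b, if b \in B then u.1 b \in A else u.1 b == 1%g] && (u.2 \in B)].
End WreathSet.

Definition avg_order (R : numFieldType) (gT : finGroupType) (G : {set gT}) : R :=
  (\sum_(g in G) (#[g]%g)%:R) / (#|G|)%:R.

Definition s_count (gT : finGroupType) (A : {set gT}) (m : nat) : nat :=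
  #|[set g in A | (g ^+ m == 1)%g]|.

Definition d_count (gT : finGroupType) (B : {set gT}) (n : nat) : nat :=
  #|[set g in B | #[g]%g == n]|.

(* Main.v *)
Require Import Defs.
From HB Require Import structures.
From mathcomp Require Import all_boot all_order all_algebra all_fingroup all_solvable.
From mathcomp Require Import all_classical all_reals zify ring lra.
Set Implicit Arguments.
Unset Strict Implicit.
Unset Printing Implicit Defensive.
Import GRing.Theory Num.Theory.
Lemma geo_nat (p k d : nat) : 0 < p -> k <= d ->
  p ^ k + p.-1 * \sum_(k <= e < d) p ^ e = p ^ d.
Proof.
move=> p0; elim: d => [|d IH].
  move=> k0; have -> : k = 0 by apply/eqP; rewrite -leqn0.
  by rewrite big_geq // muln0 addn0.
rewrite leq_eqVlt => /orP[/eqP ->|]; first by rewrite big_geq // muln0 addn0.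
rewrite ltnS => kd; rewrite big_nat_recr //= mulnDr addnA IH // expnS.
by case: p p0 {IH} => // p _ /=; rewrite mulSn.
Qed.

Lemma ord_identity (p d : nat) (gT : finGroupType) (z : gT) : prime p ->
  (z ^+ (p ^ d) = 1)%g ->
  #[z]%g + p.-1 * \sum_(0 <= e < d) p ^ e * (z ^+ (p ^ e) == 1)%g = p ^ d.
Proof.
move=> pp zd.
have : (#[z]%g %| p ^ d) by rewrite order_dvdn zd.
under eq_bigr do rewrite -order_dvdn.
case/(dvdn_pfactor _ _ pp) => k kd ->.
have p1 := prime_gt1 pp.
rewrite (@big_cat_nat _ _ _ k 0 d _ _ (leq0n k) kd) /= big1_seq ?add0n; last first.
  move=> e /andP[_]; rewrite mem_index_iota => /andP[_ ek].
  by rewrite dvdn_Pexp2l // leqNgt ek muln0.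
rewrite -(geo_nat (ltnW p1) kd); congr (_ + _ * _).
apply: eq_big_nat => e /andP[ke _].
by rewrite dvdn_Pexp2l // ke muln1.
Qed.

Section W.
Variables (gT hT : finGroupType).
Local Notation W := (wreath_type gT hT).
Local Open Scope group_scope.

Definition gpow (f : {ffun hT -> gT}) (x : hT) (k : nat) : {ffun hT -> gT} :=
  [ffun b => \prod_(i < k) f ((x ^+ i)^-1 * b)].

Lemma wr_expg (f : {ffun hT -> gT}) (x : hT) k :
  ((f, x) : W) ^+ k = (gpow f x k, x ^+ k).
Proof.
elim: k => [|k IH].
  rewrite expg0; congr (_, _); apply/ffunP => b; by rewrite !ffunE big_ord0.
rewrite expgSr IH; congr (_, _); last by rewrite expgSr.
by apply/ffunP => b; rewrite !ffunE big_ord_recr /=.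
Qed.

Lemma wr_expg1 (g : {ffun hT -> gT}) k :
  ((g, 1) : W) ^+ k = ([ffun b => g b ^+ k], 1).
Proof.
elim: k => [|k IH].
  rewrite expg0; congr (_, _); apply/ffunP => b; by rewrite !ffunE.
rewrite expgSr IH; congr (_, _); last by rewrite mulg1.
by apply/ffunP => b; rewrite !ffunE /= expgSr invg1 mul1g.
Qed.

Lemma wr_eq1 (g : {ffun hT -> gT}) (x : hT) :
  (((g, x) : W) == 1) = [forall b, g b == 1] && (x == 1).
Proof.
apply/eqP/andP => [[/ffunP E ->]|[/forallP E /eqP ->]]; last first.
  by congr (_, _); apply/ffunP => b; rewrite ffunE; apply/eqP.
by split=> //; apply/forallP => b; rewrite E ffunE.
Qed.

Lemma wr_order (f : {ffun hT -> gT}) (x : hT) :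
  #[((f, x) : W)] = (#[x] * #[((gpow f x #[x], 1%g) : W)])%N.
Proof.
set y : W := (f, x).
have xy : (#[x] %| #[y])%N.
  have := expg_order y; rewrite /y wr_expg => /eqP; rewrite wr_eq1 => /andP[_].
  by rewrite order_dvdn.
have -> : ((gpow f x #[x], 1%g) : W) = y ^+ #[x] by rewrite /y wr_expg expg_order.
by rewrite orderXgcd (gcdn_idPr xy) mulnC divnK.
Qed.

Variables (A : {group gT}) (B : {group hT}).

Definition Kset : {set {ffun hT -> gT}} :=
  [set f : {ffun hT -> gT} | [forall b, if b \in B then f b \in A else f b == 1]].

Lemma wreath_sum (R : nmodType) (F : W -> R) :
  (\sum_(u in wreath A B) F u = \sum_(x in B) \sum_(f in Kset) F (f, x))%R.
Proof.
rewrite exchange_big /= pair_big_dep /=.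
change ((\sum_(u : ({ffun hT -> gT} * hT)%type | u \in wreath A B) F u) = (\sum_(p | (p.1 \in Kset) && (p.2 \in B)) F (p.1, p.2)))%R.
apply: eq_big => -[f x] /= //.
by rewrite !inE.
Qed.

Lemma wreath_sumn (F : W -> nat) :
  \sum_(u in wreath A B) F u = \sum_(x in B) \sum_(f in Kset) F (f, x).
Proof.
rewrite exchange_big /= pair_big_dep /=.
change ((\sum_(u : ({ffun hT -> gT} * hT)%type | u \in wreath A B) F u) = (\sum_(p | (p.1 \in Kset) && (p.2 \in B)) F (p.1, p.2)))%N.
apply: eq_big => -[f x] /= //.
by rewrite !inE.
Qed.

Lemma card_wreath : #|wreath A B| = (#|B| * #|Kset|)%N.
Proof.
rewrite -(sum1_card (mem (wreath A B))) (wreath_sumn (fun _ => 1%N)).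
rewrite (eq_bigr (fun _ => #|Kset|)); first by rewrite sum_nat_const.
by move=> x _; rewrite sum1_card.
Qed.

Lemma gpow_xconj (f : {ffun hT -> gT}) (x c : hT) :
  gpow f x #[x] (x * c) = (gpow f x #[x] c) ^ (f (x * c))^-1.
Proof.
rewrite /gpow !ffunE.
have := order_gt0 x; case E: #[x] => [//|m] _.
rewrite big_ord_recl big_ord_recr /= expg0 invg1 mul1g.
have -> : (x ^+ m)^-1 * c = x * c.
  congr (_ * _); apply/eqP; rewrite eq_invg_mul -expgSr -E expg_order //.
rewrite conjgE invgK mulgK; congr (_ * _).
by apply: eq_bigr => i _; rewrite /bump /= add1n expgS invMg -mulgA mulKg.
Qed.

Lemma gpow_notB (f : {ffun hT -> gT}) (x b : hT) k : f \in Kset -> x \in B ->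
  b \notin B -> gpow f x k b = 1.
Proof.
move=> fK xB bB; rewrite /gpow ffunE big1 // => i _.
move: fK; rewrite inE => /forallP /(_ ((x ^+ i)^-1 * b)).
case: ifP => [|_ /eqP //].
by rewrite groupMl ?groupV ?groupX // (negbTE bB).
Qed.

Lemma gpow_inA (f : {ffun hT -> gT}) (x b : hT) k : f \in Kset -> x \in B ->
  b \in B -> gpow f x k b \in A.
Proof.
move=> fK xB bB; rewrite /gpow ffunE; apply: group_prod => i _.
move: fK; rewrite inE => /forallP /(_ ((x ^+ i)^-1 * b)).
by rewrite groupMl ?groupV ?groupX // bB.
Qed.

Section Trans.
Variables (x : hT).
Hypothesis xB : x \in B.

Definition Tr := transversal (rcosets <[x]> B) B.

Lemma trTr : is_transversal Tr (rcosets <[x]> B) B.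
Proof. by apply: transversalP; apply: rcosets_partition; rewrite cycle_subG. Qed.

Lemma Tr_sub : Tr \subset B.
Proof. exact: transversal_sub trTr. Qed.

Lemma card_Tr : #|Tr| = (#|B| %/ #[x])%N.
Proof.
rewrite (card_transversal trTr) divgS // cycle_subG //.
Qed.

Lemma Tr_one C : C \in rcosets <[x]> B -> exists t0, Tr :&: C = [set t0].
Proof.
move=> PC; case/and3P: trTr => _ _ /forall_inP /(_ C PC) /cards1P //.
Qed.

Lemma Tr_cover b : b \in B -> exists t, exists j, t \in Tr /\ b = x ^+ j * t.
Proof.
move=> bB.
have PC : <[x]> :* b \in rcosets <[x]> B by rewrite mem_rcosets mulSGid ?cycle_subG.
have [t Et] := Tr_one PC.
have : t \in Tr :&: (<[x]> :* b) by rewrite Et set11.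
rewrite inE => /andP[tT /rcosetP[y yx ty]].
have : y^-1 \in <[x]> by rewrite groupV.
case/cycleP => j Ej; exists t, j; split => //; rewrite ty.
by rewrite -Ej mulgA mulVg mul1g.
Qed.

Lemma Tr_sep t i : t \in Tr -> (0 < i < #[x])%N -> (x ^+ i)^-1 * t \notin Tr.
Proof.
move=> tT /andP[i0 im]; apply/negP => uT.
have tB : t \in B := fintype.subsetP Tr_sub t tT.
have PC : <[x]> :* t \in rcosets <[x]> B by rewrite mem_rcosets mulSGid ?cycle_subG.
have [t0 Et] := Tr_one PC.
have : t \in Tr :&: (<[x]> :* t) by rewrite inE tT rcoset_refl.
have : (x ^+ i)^-1 * t \in Tr :&: (<[x]> :* t).
  by rewrite inE uT; apply/rcosetP; exists (x ^+ i)^-1; rewrite ?groupV ?mem_cycle.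
rewrite Et !inE => /eqP E1 /eqP E2; move: E1; rewrite E2.
rewrite -{2}(mul1g t0) => /mulIg /eqP; rewrite invg_eq1 -order_dvdn => /dvdn_leq.
move=> /(_ i0); rewrite leqNgt im //.
Qed.

Definition Phi (f : {ffun hT -> gT}) : {ffun hT -> gT} :=
  [ffun b => if b \in Tr then gpow f x #[x] b else f b].

Lemma Phi_inj : injective Phi.
Proof.
move=> f1 f2 E; apply/ffunP => b.
have Ef : forall b, b \notin Tr -> f1 b = f2 b.
  by move=> c cT; move/ffunP/(_ c): E; rewrite !ffunE (negbTE cT).
case: (boolP (b \in Tr)) => bT; last exact: Ef.
move/ffunP/(_ b): E; rewrite !ffunE bT /gpow ?ffunE.
have := order_gt0 x; have := @Tr_sep b; case Em: #[x] => [//|m] Hs _.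
rewrite !big_ord_recl /= expg0 invg1 !mul1g.
rewrite (eq_bigr (fun i : 'I_m => f2 ((x ^+ bump 0 i)^-1 * b))); first by move/mulIg.
by move=> i _; apply: Ef; apply: Hs => //; rewrite /bump /= add1n ltnS ltn_ord.
Qed.

Lemma Phi_K f : f \in Kset -> Phi f \in Kset.
Proof.
move=> fK; rewrite inE; apply/forallP => b; rewrite ffunE.
case: (boolP (b \in Tr)) => bT.
  have bB := fintype.subsetP Tr_sub b bT; rewrite bB; exact: gpow_inA.
by move: fK; rewrite inE => /forallP; apply.
Qed.

Lemma Phi_im : Phi @: Kset = Kset.
Proof.
apply/eqP; rewrite eqEcard card_imset; last exact: Phi_inj.
rewrite leqnn andbT; apply/fintype.subsetP => _ /imsetP[f fK ->]; exact: Phi_K.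
Qed.

Lemma cond_Phi f n : f \in Kset ->
  [forall b, gpow f x #[x] b ^+ n == 1] = [forall t in Tr, Phi f t ^+ n == 1].
Proof.
move=> fK; apply/forallP/forall_inP.
  by move=> H t tT; rewrite ffunE tT; exact: H.
move=> H b; case: (boolP (b \in B)) => bB; last by rewrite gpow_notB // expg1n.
have [t [j [tT ->]]] := Tr_cover bB.
have := H t tT; rewrite ffunE tT => Ht.
elim: j => [|j IH]; first by rewrite expg0 mul1g.
by rewrite expgS -mulgA gpow_xconj -conjXg conjg_eq1.
Qed.

Lemma count_Phi n :
  #|[set f in Kset | [forall b, gpow f x #[x] b ^+ n == 1]]| =
  #|[set h in Kset | [forall t in Tr, h t ^+ n == 1]]|.
Proof.
rewrite -(card_imset _ Phi_inj); apply: eq_card => h.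
apply/imsetP/idP.
  case=> f; rewrite inE => /andP[fK]; rewrite cond_Phi // => Hc ->.
  by rewrite inE Phi_K.
rewrite inE => /andP[hK Hc].
move: hK; rewrite -{1}Phi_im => /imsetP[f fK Ef].
by exists f => //; rewrite inE fK cond_Phi // -Ef.
Qed.
End Trans.

Lemma count_family (T0 : {set hT}) (S : {set gT}) :
  T0 \subset B -> S \subset A ->
  #|[set h in Kset | [forall t in T0, h t \in S]]| =
  (#|S| ^ #|T0| * #|A| ^ (#|B| - #|T0|))%N.
Proof.
move=> TB SA.
pose F b := if b \in T0 then S else if b \in B then (A : {set gT}) else [set 1].
have -> : [set h in Kset | [forall t in T0, h t \in S]] =
          [set h : {ffun hT -> gT} | [forall b, h b \in F b]].
  apply/setP => h; rewrite !inE; apply/andP/forallP.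
    case=> /forallP HK /forall_inP HT b; rewrite /F; case: ifP => bT; first exact: HT.
    by have := HK b; case: (b \in B) => // /eqP ->; rewrite inE.
  move=> H; split; last by apply/forall_inP => t tT; have := H t; rewrite /F tT.
  apply/forallP => b; have := H b; rewrite /F; case: ifP => bT.
    by rewrite (fintype.subsetP TB b bT) => /(fintype.subsetP SA).
  by case: ifP => // _; rewrite inE.
rewrite cardsE (eq_card (B := family (fun b => mem (F b)))); last first.
  by move=> h; rewrite !inE.
rewrite card_family foldrE big_map big_enum /=.
rewrite (bigID (fun b => b \in T0)) /=.
rewrite (eq_bigr (fun _ => #|S|)); last by move=> b bT; rewrite /F bT.
rewrite (eq_bigl (fun b => b \in T0)) // prod_nat_const; congr (_ * _)%N.
rewrite (bigID (fun b => b \in B)) /=.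
rewrite [X in (_ * X)%N]big1; last first.
  by move=> b /andP[bT bB]; rewrite /F (negbTE bT) (negbTE bB) cards1.
rewrite muln1 (eq_bigr (fun _ => #|A|)); last first.
  by move=> b /andP[bT bB]; rewrite /F (negbTE bT) bB.
rewrite (eq_bigl (fun b => b \in B :\: T0)); last by move=> b; rewrite !inE andbC.
by rewrite prod_nat_const cardsD (finset.setIidPr TB).
Qed.

Definition Ncnt (x : hT) (n : nat) :=
  #|[set f in Kset | [forall b, gpow f x #[x] b ^+ n == 1]]|.

Lemma Ncnt_val x n : x \in B ->
  Ncnt x n = (#|[set g in A | (g ^+ n)%g == 1%g]| ^ (#|B| %/ #[x]) *
              #|A| ^ (#|B| - #|B| %/ #[x]))%N.
Proof.
move=> xB; rewrite /Ncnt count_Phi // -card_Tr //.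
rewrite -count_family ?Tr_sub //; last first.
  by apply/fintype.subsetP => g; rewrite inE => /andP[].
apply: eq_card => h; rewrite !inE; apply/andP/andP => -[hK H]; split => //;
  apply/forall_inP => t tT; have := forall_inP H t tT; rewrite ?inE.
  move=> ->; rewrite andbT.
  move/forallP: hK => /(_ t); by rewrite (fintype.subsetP (Tr_sub xB) t tT).
by case/andP.
Qed.

Lemma card_K : #|Kset| = (#|A| ^ #|B|)%N.
Proof.
have := count_family (T0 := finset.set0) (S := finset.set0) (finset.sub0set _) (finset.sub0set _).
rewrite !finset.cards0 expn0 mul1n subn0 => <-; apply: eq_card => h; rewrite !inE.
have -> : [forall t in finset.set0, h t \in finset.set0] by apply/forall_inP => t; rewrite inE.
by rewrite andbT.
Qed.

Lemma sum_card_cond (P : pred {ffun hT -> gT}) :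
  \sum_(f in Kset) (P f : nat) = #|[set f in Kset | P f]|.
Proof.
rewrite -big_mkcondr /= -sum1_card; apply: eq_bigl => f; by rewrite !inE.
Qed.

Lemma sum_x_nat (p d : nat) x : prime p -> x \in B ->
  (forall g, g \in A -> g ^+ (p ^ d) = 1) ->
  (\sum_(f in Kset) #[((f, x) : W)] +
    #[x] * (p.-1 * \sum_(0 <= e < d) p ^ e * Ncnt x (p ^ e)) =
  #[x] * (#|Kset| * p ^ d))%N.
Proof.
move=> pp xB expA.
have H f : f \in Kset -> (#[((f, x) : W)] +
   #[x] * (p.-1 * \sum_(0 <= e < d) p ^ e * ([forall b, (gpow f x #[x] b ^+ (p ^ e)%N)%g == 1%g] : nat)) =
   #[x] * p ^ d)%N.
  move=> fK; rewrite wr_order -mulnDr; congr (_ * _)%N.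
  rewrite -(@ord_identity p d W ((gpow f x #[x], 1%g) : W) pp); last first.
    rewrite wr_expg1; apply/eqP; rewrite wr_eq1 eqxx andbT; apply/forallP => b.
    rewrite ffunE; case: (boolP (b \in B)) => bB.
      by rewrite expA ?gpow_inA.
    by rewrite gpow_notB // expg1n.
  congr (_ + _ * _)%N; apply: eq_bigr => e _; congr (_ * nat_of_bool _)%N.
  rewrite wr_expg1 wr_eq1 eqxx andbT; apply: eq_forallb => b; by rewrite !ffunE.
have -> : (#[x] * (#|Kset| * p ^ d) = \sum_(f in Kset) (#[x] * p ^ d))%N by rewrite sum_nat_const mulnCA.
rewrite -(eq_bigr _ H) big_split /=; congr (_ + _)%N.
rewrite -big_distrr /= -big_distrr /=; congr (_ * (_ * _))%N.
rewrite exchange_big /=; apply: eq_bigr => e _.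
by rewrite -big_distrr /= sum_card_cond.
Qed.
End W.

Lemma expA_lem (gT : finGroupType) (A : {group gT}) p a d : prime p ->
  #|A| = (p ^ a)%N -> (\max_(g in A) #[g]%g)%N = (p ^ d)%N ->
  forall g, g \in A -> (g ^+ (p ^ d) = 1)%g.
Proof.
move=> pp cA mA g gA; apply/eqP; rewrite -order_dvdn.
have : (#[g]%g %| p ^ a)%N by rewrite -cA order_dvdG.
case/(dvdn_pfactor _ _ pp) => k _ Ek.
have : (#[g]%g <= p ^ d)%N by rewrite -mA (leq_bigmax_cond _ gA).
by rewrite Ek leq_exp2l ?prime_gt1 // => /dvdn_exp2l.
Qed.

Lemma d_pos (gT : finGroupType) (A : {group gT}) p a d : prime p ->
  #|A| = (p ^ a)%N -> (1 <= a)%N -> (\max_(g in A) #[g]%g)%N = (p ^ d)%N ->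
  (0 < d)%N.
Proof.
move=> pp cA a1 mA; case: d mA => // mA.
have HA := expA_lem pp cA mA.
have : (#|A| <= 1)%N.
  rewrite -(cards1 (1%g : gT)); apply: subset_leq_card; apply/fintype.subsetP => g gA.
  by rewrite inE; have := HA g gA; rewrite expn0 expg1 => ->.
by rewrite cA leqNgt -{1}(expn0 p) ltn_exp2l ?prime_gt1 // a1.
Qed.

Lemma sum_ind_card (T : finType) (D : {set T}) (P : pred T) :
  #|[set g in D | P g]| = (\sum_(g in D) (P g : nat))%N.
Proof.
rewrite -big_mkcondr /= -sum1_card; apply: eq_bigl => f; by rewrite !inE.
Qed.

Local Open Scope ring_scope.
Lemma regroup (R : numFieldType) (hT : finGroupType) (B : {group hT}) p b
  (G : nat -> R) : prime p -> #|B| = (p ^ b)%N ->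
  \sum_(0 <= n < b.+1) ((p ^ n)%:R)^-1 * (d_count B (p ^ (b - n)))%:R * G (p ^ n)%N
  = \sum_(x in B) ((#[x]%g)%:R / (#|B|)%:R) * G (#|B| %/ #[x]%g)%N.
Proof.
move=> pp cB; have p1 := prime_gt1 pp.
under eq_bigr do rewrite /d_count sum_ind_card natr_sum mulr_sumr mulr_suml.
rewrite exchange_big /=; apply: eq_bigr => x xB.
have : (#[x]%g %| p ^ b)%N by rewrite -cB order_dvdG.
case/(dvdn_pfactor _ _ pp) => k kb Ek.
rewrite Ek cB -expnB ?prime_gt0 //.
rewrite (bigD1_seq (b - k)%N) /=; last 2 first.
- by rewrite mem_index_iota; lia.
- by rewrite iota_uniq andbT mem_iota.
rewrite big1_seq ?addr0; last first.
  move=> i /andP[ik]; rewrite mem_index_iota => /andP[_ ib].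
  rewrite eqn_exp2l //; have -> : (k == b - i)%N = false.
    by apply/negbTE; apply: contra ik => /eqP ->; apply/eqP; lia.
  by rewrite mulr0 mul0r.
have -> : (b - (b - k))%N = k by lia.
rewrite eqxx mulr1; congr (_ * _).
have -> : (p ^ b = p ^ (b - k) * p ^ k)%N by rewrite -expnD subnK.
rewrite natrM invfM mulrCA mulfV ?mulr1 // pnatr_eq0 expn_eq0 negb_and.
by rewrite -lt0n prime_gt0 // orbT.
Qed.

Theorem theorem4 (R : realType) :
  exists C : R, 0 < C /\
  forall (p : nat) (gT hT : finGroupType) (A : {group gT}) (B : {group hT})
         (a b d : nat),
    prime p -> (#|A| = p ^ a)%N -> (#|B| = p ^ b)%N -> (1 <= a)%N -> (1 <= b)%N ->
    (\max_(g in A) #[g]%g)%N = (p ^ d)%N ->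
    let aB : R := avg_order R B in
    let k := fun n : nat =>
      ((p ^ n)%:R)^-1 * (d_count B (p ^ (b - n)))%:R / aB in
    `| avg_order R (wreath A B)
       - ((p ^ d)%:R * aB
          - (p%:R - 1) * aB *
            \sum_(0 <= n < b.+1)
               k n * (p ^ d.-1)%:R
                   * ((s_count A (p ^ d.-1))%:R / (p ^ a)%:R) ^+ (p ^ n)) |
    <= C * (p ^ d.-1)%:R * aB.
Proof.
exists 1; split => // p gT hT A B a b d pp cA cB a1 b1 mA /=.
set aB := avg_order R B.
have p1 := prime_gt1 pp; have p0 := prime_gt0 pp.
have d0 := d_pos pp cA a1 mA.
have expA := expA_lem pp cA mA.
set t : R := (s_count A (p ^ d.-1))%:R / (p ^ a)%:R.
set nB : R := (#|B|)%:R; set nK : R := (#|Kset A B|)%:R.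
have nB0 : 0 < nB by rewrite ltr0n cB expn_gt0 p0.
have nK0 : 0 < nK by rewrite ltr0n card_K expn_gt0 cA expn_gt0 p0.
have maB : aB = (\sum_(x in B) (#[x]%g)%:R) / nB by [].
have aB0 : 0 < aB.
    by rewrite maB divr_gt0 // (bigD1 1%g) //= ltr_pwDl ?sumr_ge0 // ltr0n order_gt0.
have [d' Ed] : exists d', d = d'.+1 by exists d.-1; rewrite prednK.
rewrite Ed /= in t *; rewrite Ed in expA.
have q1 : (p.-1)%:R = p%:R - 1 :> R by rewrite -subn1 natrB.
pose Yn x := (\sum_(0 <= e < d') p ^ e * Ncnt A B x (p ^ e))%N.
have H1 : avg_order R (wreath A B) =
    (\sum_(x in B) \sum_(f in Kset A B) (#[((f, x) : wreath_type gT hT)]%g)%:R) / (nB * nK).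
  by rewrite /avg_order wreath_sum card_wreath natrM.
have H2 x : x \in B -> \sum_(f in Kset A B) (#[((f, x) : wreath_type gT hT)]%g)%:R =
    (#[x]%g)%:R * nK * (p ^ d'.+1)%:R
    - (p%:R - 1) * (#[x]%g)%:R * ((Yn x)%:R + (p ^ d')%:R * (Ncnt A B x (p ^ d'))%:R) :> R.
  move=> xB; have := sum_x_nat (A:=A) (d:=d'.+1) pp xB expA.
  rewrite big_nat_recr //= => /(congr1 (fun n : nat => n%:R : R)).
  rewrite natrD !natrM natrD natrM q1 natr_sum => E.
  rewrite /nK /Yn; lra.
have nA0 : (p ^ a)%:R != 0 :> R by rewrite pnatr_eq0 expn_eq0 negb_and -lt0n p0.
have H3 x : x \in B -> (Ncnt A B x (p ^ d'))%:R = nK * t ^+ (#|B| %/ #[x]%g) :> R.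
  move=> xB; rewrite Ncnt_val // /nK card_K natrM !natrX /t cA.
  set r := (#|B| %/ #[x]%g)%N.
  have rB : (r <= #|B|)%N by rewrite leq_div.
  rewrite -{2}(subnK rB) exprD expr_div_n /s_count.
  field; by rewrite expf_neq0.
set W := \sum_(x in B) ((#[x]%g)%:R / nB) * t ^+ (#|B| %/ #[x]%g).
set Z := \sum_(x in B) ((#[x]%g)%:R * (Yn x)%:R / (nB * nK)).
have HX : avg_order R (wreath A B) =
    (p ^ d'.+1)%:R * aB - (p%:R - 1) * (p ^ d')%:R * W - (p%:R - 1) * Z.
  rewrite H1 maB /W /Z !mulr_suml !mulr_sumr -!sumrB; apply: eq_bigr => x xB.
  rewrite H2 // H3 //; field.
  by apply/andP; split; [exact: (lt0r_neq0 nK0) | exact: (lt0r_neq0 nB0)].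
have aBn0 : aB != 0 := lt0r_neq0 aB0.
have HM : \sum_(0 <= n < b.+1) (p ^ n)%:R^-1 * (d_count B (p ^ (b - n)))%:R / aB
     * (p ^ d')%:R * t ^+ (p ^ n) = (p ^ d')%:R / aB * W.
  rewrite /W -(@regroup R hT B p b (fun r => t ^+ r) pp cB) mulr_sumr.
  by apply: eq_bigr => n _; ring.
rewrite HM HX.
have -> : (p ^ d'.+1)%:R * aB - (p%:R - 1) * (p ^ d')%:R * W - (p%:R - 1) * Z -
   ((p ^ d'.+1)%:R * aB - (p%:R - 1) * aB * ((p ^ d')%:R / aB * W)) = - ((p%:R - 1) * Z).
  by field.
have q0 : 0 <= p%:R - 1 :> R by rewrite subr_ge0 ler1n.
have Z0 : 0 <= Z.
  by apply: sumr_ge0 => x _; rewrite divr_ge0 ?mulr_ge0 ?ler0n // mulr_ge0 ?ltW.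
rewrite normrN ger0_norm ?mulr_ge0 //.
pose G0 := (\sum_(0 <= e < d') p ^ e)%N.
have geo : (p%:R - 1) * G0%:R = (p ^ d')%:R - 1 :> R.
  have := geo_nat p0 (leq0n d'); rewrite expn0 => /(congr1 (fun n : nat => n%:R : R)).
  rewrite natrD natrM q1 => <-; lra.
have ZB : Z <= aB * G0%:R.
  rewrite /Z maB !mulr_suml; apply: ler_sum => x xB.
  have Yx : (Yn x <= #|Kset A B| * G0)%N.
    rewrite /Yn /G0 big_distrr /=; apply: leq_sum => e _.
    rewrite mulnC leq_mul2r; apply/orP; right.
    by apply: subset_leq_card; apply/fintype.subsetP => f; rewrite inE => /andP[].
  rewrite -(ler_nat R) natrM in Yx.
  rewrite -/nK in Yx.
  rewrite (_ : (#[x]%g)%:R / nB * G0%:R = (#[x]%g)%:R * (nK * G0%:R) / (nB * nK)); last first.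
    by field; apply/andP; split; [exact: (lt0r_neq0 nK0) | exact: (lt0r_neq0 nB0)].
  rewrite ler_pM2r ?invr_gt0 ?mulr_gt0 // ler_wpM2l //.
have : (p%:R - 1) * Z <= (p%:R - 1) * (aB * G0%:R) by rewrite ler_wpM2l.
have : 0 <= aB by rewrite le0r aB0 orbT.
have : 0 <= (p ^ d')%:R :> R := ler0n _ _.
rewrite mulrCA geo mul1r => h1 h2 h3; nra.
Qed.
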